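(* Let $F$ be a field of characteristic $p\ge2$, let $l,m,n\ge2$ be integers with $p\mid n=lm$, and set $T=D_{n,l}\cap D_{n,m}\cap D_n^+$. (1) If $p\nmid l$, then for every monic original $f\in T$ there exist monic original $g^*,h^*\in F[x]$ of degrees $l$ and $m$, respectively, with $f=g^*\circ h^*$, $(g^* )'(h^* )'\ne0$, and $0\le\deg (h^* )'<m-l$. (2) If $p\mid l$, then for every monic original $f\in T$ there exist monic original $g,h\in F[x]$ of degrees $m$ and $l$, respectively, with $f=g\circ h$ and $\deg g'\le m-(m+1)/l$.
   Context: $g\circ h=g(h)$; monic means leading coefficient 1; original means value 0 at 0; $'$ is the formal derivative. A polynomial is decomposable if it equals $g\circ h$ with $\deg g,\deg h\ge2$; $D_n$ is the set of decomposable polynomials of degree $n$ in $F[x]$ and $D_n^+=D_n\setminus F[x^p]$. For a divisor $e$ of $n$, $D_{n,e}=\{g\circ h:\ \deg g=e,\ h\text{ monic},\ h(0)=0,\ \deg h=n/e\}$. *)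

(* Defs.v *)
From HB Require Import structures.
From mathcomp Require Import all_boot all_order all_algebra.
Set Implicit Arguments. Unset Strict Implicit. Unset Printing Implicit Defensive.
Import GRing.Theory.
Local Open Scope ring_scope.

(* Conventions: g \o h is  g \Po h  (= g(h(x))) ; deg p = (size p).-1,
   so "deg p = d" with p <> 0 is  size p = d.+1. *)

Definition monic_orig (F : fieldType) (f : {poly F}) : Prop :=
  f \is monic /\ f.[0] = 0.

Definition Dn (F : fieldType) (n : nat) (f : {poly F}) : Prop :=
  size f = n.+1 /\
  exists g h : {poly F}, (2 <= (size g).-1)%N /\ (2 <= (size h).-1)%N /\ f = g \Po h.

Definition in_Fxp (F : fieldType) (p : nat) (f : {poly F}) : Prop :=
  forall i : nat, ~~ (p %| i)%N -> f`_i = 0.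

Definition Dn_plus (F : fieldType) (p n : nat) (f : {poly F}) : Prop :=
  Dn n f /\ ~ in_Fxp p f.

Definition Dne (F : fieldType) (n e : nat) (f : {poly F}) : Prop :=
  exists g h : {poly F},
    size g = e.+1 /\ h \is monic /\ h.[0] = 0 /\ size h = (n %/ e).+1 /\ f = g \Po h.

Definition Tset (F : fieldType) (p n l m : nat) (f : {poly F}) : Prop :=
  Dne n l f /\ Dne n m f /\ Dn_plus p n f.

(* Main.v *)
Require Import Defs.
From HB Require Import structures.
From mathcomp Require Import all_boot all_order all_algebra.
From mathcomp Require Import zify ring lra.
Import GRing.Theory Num.Theory.
Set Implicit Arguments. Unset Strict Implicit.
Local Open Scope ring_scope.

Lemma nz_deriv_of (F : fieldType) (p : nat) (f : {poly F}) :
  p \in [pchar F] -> ~ in_Fxp p f -> f^`() != 0.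
Proof.
move=> pc nf; apply/negP => /eqP d0; apply: nf => i npi.
case: i npi => [|j]; first by rewrite dvdn0.
move=> npi.
have := congr1 (fun q : {poly F} => q`_j) d0.
rewrite coef_deriv coef0 -mulr_natr => /eqP.
rewrite mulf_eq0 -(dvdn_pcharf pc) (negbTE npi) orbF => /eqP //.
Qed.

Lemma der_size_le (F : fieldType) (p k : nat) (q : {poly F}) :
  p \in [pchar F] -> (size q <= k.+1)%N -> (p %| k)%N -> (size q^`() <= k.-1)%N.
Proof.
move=> pc sq pk; apply/leq_sizeP => j hj.
rewrite coef_deriv.
have [e|ne] := eqVneq j.+1 k.
  by rewrite e; apply/eqP; rewrite -mulr_natr mulf_eq0 -(dvdn_pcharf pc) pk orbT.
move/eqP: ne => ne; rewrite nth_default ?mul0rn //; apply: leq_trans sq _; lia.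
Qed.

Lemma der_size_le0 (F : fieldType) (k : nat) (q : {poly F}) :
  (size q <= k.+1)%N -> (size q^`() <= k)%N.
Proof.
move=> sq; apply/leq_sizeP => j hj; rewrite coef_deriv nth_default ?mul0rn //.
apply: leq_trans sq _; lia.
Qed.

Lemma der_size_eq (F : fieldType) (p k : nat) (q : {poly F}) :
  p \in [pchar F] -> size q = k.+1 -> q \is monic -> ~~ (p %| k)%N ->
  size q^`() = k.
Proof.
move=> pc sq mq pk; apply/eqP; rewrite eqn_leq; apply/andP; split.
  apply/leq_sizeP => j hj; rewrite coef_deriv nth_default ?mul0rn // sq; lia.
case: k sq pk => [|k] sq pk; first by rewrite dvdn0 in pk.
rewrite ltnNge; apply/negP => /leq_sizeP /(_ k (leqnn _)) /eqP.
rewrite coef_deriv -mulr_natr mulf_eq0 -(dvdn_pcharf pc) (negbTE pk) orbF.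
have : q`_k.+1 = lead_coef q by rewrite lead_coefE sq.
by rewrite (monicP mq) => ->; rewrite oner_eq0.
Qed.

Lemma norm_dec (F : fieldType) (f g h : {poly F}) (e k : nat) :
  monic_orig f -> size g = e.+1 -> h \is monic -> h.[0] = 0 -> size h = k.+1 ->
  (1 <= k)%N -> f = g \Po h -> monic_orig g.
Proof.
move=> [mf f0] sg mh h0 sh k1 fe; split.
  apply/monicP; have := monicP mf; rewrite fe lead_coef_comp ?sh //.
  by rewrite (monicP mh) expr1n mulr1.
by move: f0; rewrite fe horner_comp h0.
Qed.

Lemma size_compd (F : fieldType) (a b : {poly F}) :
  (size (a \Po b)).-1 = ((size a).-1 * (size b).-1)%N.
Proof. exact: size_comp_poly. Qed.

Lemma size_prod (F : fieldType) (a b : {poly F}) :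
  a * b != 0 -> (size (a * b)).-1 = ((size a).-1 + (size b).-1)%N /\ a != 0 /\ b != 0.
Proof.
move=> nz; have a0 : a != 0 by apply: contraNneq nz => ->; rewrite mul0r.
have b0 : b != 0 by apply: contraNneq nz => ->; rewrite mulr0.
split=> //; rewrite size_mul //.
by rewrite (polySpred a0) (polySpred b0) addSn addnS.
Qed.

Theorem theorem4p18 (F : fieldType) (p l m n : nat) :
  p \in [pchar F] -> (2 <= p)%N ->
  (2 <= l)%N -> (2 <= m)%N -> (2 <= n)%N -> n = (l * m)%N -> (p %| n)%N ->
  (* (1) *)
  ((~~ (p %| l)%N) ->
    forall f : {poly F}, monic_orig f -> Tset p n l m f ->
      exists gs hs : {poly F},
        monic_orig gs /\ monic_orig hs /\
        size gs = l.+1 /\ size hs = m.+1 /\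
        f = gs \Po hs /\
        gs^`() * hs^`() != 0 /\
        ((size hs^`()).-1 < m - l)%N) /\
  (* (2) *)
  ((p %| l)%N ->
    forall f : {poly F}, monic_orig f -> Tset p n l m f ->
      exists g h : {poly F},
        monic_orig g /\ monic_orig h /\
        size g = m.+1 /\ size h = l.+1 /\
        f = g \Po h /\
        (g^`() != 0 ->
          ((size g^`()).-1)%:R <= (m%:R - (m.+1)%:R / l%:R : rat))).
Proof.
move=> pc p2 l2 m2 n2 nlm pn.
have nl : (n %/ l)%N = m by rewrite nlm mulKn // (ltnW l2).
have nm : (n %/ m)%N = l by rewrite nlm mulnK // (ltnW m2).
split.
- move=> pl f mf [[g [h [sg [mh [h0 [sh fe]]]]]] [[g2 [h2 [sg2 [mh2 [h20 [sh2 fe2]]]]]] [_ nf]]].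
  rewrite nl in sh; rewrite nm in sh2.
  have pm : (p %| m)%N.
    have pp : prime p by case/andP: pc.
    by move: pn; rewrite nlm Euclid_dvdM // (negbTE pl).
  have mg := norm_dec mf sg mh h0 sh (ltnW m2) fe.
  exists g, h; split; first exact mg; split; first by []; do 3! (split; first by []).
  have f'0 := nz_deriv_of pc nf.
  have E1 := f'0; rewrite fe deriv_comp in E1.
  have E2 := f'0; rewrite fe2 deriv_comp in E2.
  have [d1 [_ h'0]] := size_prod E1.
  have [d2 _] := size_prod E2.
  have e12 : (g^`() \Po h) * h^`() = (g2^`() \Po h2) * h2^`() by rewrite -!deriv_comp -fe -fe2.
  rewrite e12 {}d2 in d1.
  split.
    apply: mulf_neq0 => //.
    rewrite -size_poly_eq0 (der_size_eq pc sg (proj1 mg) pl); clear -l2; lia.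
  rewrite !size_compd (der_size_eq pc sg (proj1 mg) pl) sh sh2 /= in d1.
  have a1 := der_size_le pc (eq_leq sg2) pm.
  have a2 : (size h2^`() <= l)%N by apply: der_size_le0; rewrite sh2.
  have a3 : ((size g2^`()).-1 * l <= (m - 2) * l)%N by apply: leq_mul => //; clear -a1; lia.
  move: h'0; rewrite -size_poly_eq0 => h'0.
  have e1 : ((m - 2) * l + 2 * l = m * l)%N by rewrite -mulnDl subnK.
  have e2 : (l.-1 * m + m = l * m)%N.
    by rewrite -{2}(mul1n m) -mulnDl addn1 prednK // (ltnW l2).
  rewrite (mulnC m l) in e1.
  move: d1 a1 a2 a3 h'0 e1 e2; rewrite -subn1.
  move: (size h^`()) (size h2^`()) (size g2^`()) => C B A.
  rewrite -!subn1.
  move: (l * m)%N ((A - 1) * l)%N ((m-2) * l)%N ((l-1) * m)%N => P Q R S.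
  clear -l2 m2; lia.
- move=> pl f mf [[g2 [h2 [sg2 [mh2 [h20 [sh2 fe2]]]]]] [[g [h [sg [mh [h0 [sh fe]]]]]] [_ nf]]].
  rewrite nl in sh2; rewrite nm in sh.
  have mg := norm_dec mf sg mh h0 sh (ltnW l2) fe.
  exists g, h; split; first exact mg; split; first by []; do 3! (split; first by []).
  move=> _.
  have f'0 := nz_deriv_of pc nf.
  have E1 := f'0; rewrite fe deriv_comp in E1.
  have E2 := f'0; rewrite fe2 deriv_comp in E2.
  have [d1 _] := size_prod E1.
  have [d2 _] := size_prod E2.
  have e12 : (g^`() \Po h) * h^`() = (g2^`() \Po h2) * h2^`() by rewrite -!deriv_comp -fe -fe2.
  rewrite e12 {}d2 in d1.
  rewrite !size_compd sh sh2 /= in d1.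
  have a1 := der_size_le pc (eq_leq sg2) pl.
  have a2 : (size h2^`() <= m)%N by apply: der_size_le0; rewrite sh2.
  have a3 : ((size g2^`()).-1 * m <= (l - 2) * m)%N by apply: leq_mul => //; clear -a1; lia.
  set x := (size g^`()).-1 in d1 *.
  have e1 : ((l - 2) * m + 2 * m = l * m)%N by rewrite -mulnDl subnK.
  have H : (x * l + m.+1 <= m * l)%N.
  rewrite (mulnC m l).
  move: d1 a1 a2 a3 e1.
  move: (size h^`()) (size h2^`()) (size g2^`()) => C B A.
  rewrite -!subn1.
  move: (l * m)%N ((A - 1) * m)%N ((l-2) * m)%N (x * l)%N => P Q R S.
  clear -l2 m2; lia.
  have Lp : (0 : rat) < l%:R by rewrite ltr0n (ltnW l2).
  have Hr : (x%:R * l%:R + m.+1%:R <= m%:R * l%:R :> rat).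
    by rewrite -!natrM -natrD ler_nat.
  rewrite -(ler_pM2r Lp) mulrBl divfK ?gt_eqF //.
  lra.
  by rewrite pnatr_eq0 -lt0n (ltnW l2).
Qed.
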